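(* Let $G=(V,E,H)$ be a HEDG and $X,Y,Z,U\subseteq V$ with $U\cap(X\cup Y\cup Z)=\emptyset$. Then $X\perp^d_G Y\mid Z$ if and only if $X\perp^d_{G^{\mathrm{marg}\setminus U}}Y\mid Z$.
   Context: HEDG $G=(V,E,H)$: $V$ finite, $E\subseteq V\times V$ (self-loops allowed), $H$ a simplicial complex on $V$ (contains singletons, closed under subsets); for distinct $v,w$, $v\leftrightarrow w$ means $\{v,w\}\in H$. $\mathrm{Anc}^G(Z)$: nodes with a directed path into $Z$ (including $Z$). Marginalization $G^{\mathrm{marg}\setminus U}=(V\setminus U,E',H')$: $v_1\to v_2\in E'$ iff $G$ has a directed path $v_1\to u_1\to\cdots\to u_r\to v_2$ ($r\ge0$, all $u_i\in U$); $F'\subseteq V\setminus U$ is in $H'$ iff there is $F\in H$, $F\subseteq F'\cup U$, such that each $v\in F'$ lies in $F\setminus U$ or is reached by a directed path $u_1\to\cdots\to u_r\to v$ ($r\ge1$, $u_i\in U$, $u_1\in F\cap U$). A path is a node sequence $v_1,\dots,v_n$ ($n\ge1$, repetitions allowed) with consecutive nodes joined by $\to$, $\leftarrow$ or $\leftrightarrow$. It is $Z$-blocked if $v_1\in Z$ or $v_n\in Z$, or some intermediate $v_i$ is a collider (both adjacent edges have an arrowhead at $v_i$) with $v_i\notin\mathrm{Anc}(Z)$, or some intermediate non-collider lies in $Z$. $X\perp^d Y\mid Z$ iff every path with one endnode in $X$ and the other in $Y$ is $Z$-blocked (ancestors and paths taken in the respective HEDG). *)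

(* Defs.v *)
From mathcomp Require Import all_boot.
Set Implicit Arguments. Unset Strict Implicit. Unset Printing Implicit Defensive.

(* A HEDG over a finite ambient type T: vertex set vs, directed edges ed
   (self-loops allowed), hyperedges hy (a simplicial complex on vs). *)
Record hedg (T : finType) := Hedg {
  vs : {set T};
  ed : T -> T -> Prop;
  hy : {set T} -> Prop }.

Definition wf_hedg (T : finType) (G : hedg T) : Prop :=
  (forall a b, ed G a b -> a \in vs G /\ b \in vs G) /\
  (forall F, hy G F -> F \subset vs G) /\
  (forall v, v \in vs G -> hy G [set v]) /\
  (forall F F' : {set T}, hy G F -> F' \subset F -> hy G F').

Fixpoint chain (T : Type) (r : T -> T -> Prop) (x : T) (p : seq T) : Prop :=
  match p with
  | [::] => True
  | y :: p' => r x y /\ chain r y p'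
  end.

Definition Anc (T : finType) (G : hedg T) (Z : {set T}) (v : T) : Prop :=
  v \in vs G /\ exists p : seq T, chain (ed G) v p /\ last v p \in Z.

(* Edge marks of a path step from a to b: Fwd = a -> b, Bwd = a <- b,
   Bi = a <-> b. *)
Inductive mark := Fwd | Bwd | Bi.

Definition step_ok (T : finType) (G : hedg T) (a : T) (m : mark) (b : T) : Prop :=
  match m with
  | Fwd => ed G a b
  | Bwd => ed G b a
  | Bi => a <> b /\ hy G [set a; b]
  end.

Fixpoint steps_ok (T : finType) (G : hedg T) (a : T) (s : seq (mark * T)) : Prop :=
  match s with
  | [::] => True
  | (m, b) :: s' => step_ok G a m b /\ steps_ok G b s'
  end.

Definition pnodes (T : finType) (v1 : T) (s : seq (mark * T)) : seq T :=
  v1 :: map snd s.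

Definition is_path (T : finType) (G : hedg T) (v1 : T) (s : seq (mark * T)) : Prop :=
  all (fun v => v \in vs G) (pnodes v1 s) /\ steps_ok G v1 s.

(* arrowhead at the end node of an incoming step / at the start node of an
   outgoing step *)
Definition head_in (m : mark) : bool := if m is Bwd then false else true.
Definition head_out (m : mark) : bool := if m is Fwd then false else true.

Definition blocked (T : finType) (G : hedg T) (Z : {set T}) (v1 : T)
    (s : seq (mark * T)) : Prop :=
  v1 \in Z \/ last v1 (map snd s) \in Z \/
  exists i : nat, 0 < i < size s /\
    let vi := nth v1 (pnodes v1 s) i in
    let min := (nth (Fwd, v1) s i.-1).1 in
    let mout := (nth (Fwd, v1) s i).1 in
    if head_in min && head_out mout
    then ~ Anc G Z vi
    else vi \in Z.

Definition dsep (T : finType) (G : hedg T) (X Y Z : {set T}) : Prop :=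
  forall (v1 : T) (s : seq (mark * T)), is_path G v1 s ->
    ((v1 \in X /\ last v1 (map snd s) \in Y) \/
     (v1 \in Y /\ last v1 (map snd s) \in X)) ->
    blocked G Z v1 s.

Definition marg (T : finType) (G : hedg T) (U : {set T}) : hedg T :=
  Hedg (vs G :\: U)
    (fun a b => a \in vs G :\: U /\ b \in vs G :\: U /\
       exists p : seq T, chain (ed G) a (rcons p b) /\ all (fun u => u \in U) p)
    (fun F' => F' \subset vs G :\: U /\
       exists F, hy G F /\ F \subset F' :|: U /\
         forall v, v \in F' ->
           v \in F :\: U \/
           exists u1 (p : seq T), u1 \in F :&: U /\
             chain (ed G) u1 (rcons p v) /\ all (fun u => u \in U) p).

(* Main.v *)
Require Import Defs.
From mathcomp Require Import all_boot.
From Stdlib Require Import Classical.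
Set Implicit Arguments. Unset Strict Implicit. Unset Printing Implicit Defensive.

Fixpoint loc (T : Type) (P : mark -> T -> mark -> Prop) (mi : mark) (v : T)
   (s : seq (mark * T)) : Prop :=
  match s with
  | [::] => True
  | (mo, b) :: s' => P mi v mo /\ loc P mo b s'
  end.

Definition lastm (T : Type) (mi : mark) (s : seq (mark*T)) := last mi (map fst s).
Definition lastn (T : Type) (v : T) (s : seq (mark*T)) := last v (map snd s).

Lemma loc_cat T P mi (v : T) s1 s2 :
  loc P mi v (s1 ++ s2) <-> loc P mi v s1 /\ loc P (lastm mi s1) (lastn v s1) s2.
Proof.
elim: s1 mi v => [|[mo b] s1 IH] mi v /=; first by tauto.
rewrite IH /lastm /lastn /=; tauto.
Qed.

Lemma loc_mono T (P Q : mark -> T -> mark -> Prop) mi v s :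
  (forall mi v mo, P mi v mo -> Q mi v mo) -> loc P mi v s -> loc Q mi v s.
Proof.
move=> H; elim: s mi v => [|[mo b] s IH] mi v //= [H1 H2]; split; auto.
Qed.

Lemma loc_in T (P : mark -> T -> mark -> Prop) m m' v s :
  (forall mo, P m v mo -> P m' v mo) -> loc P m v s -> loc P m' v s.
Proof. by case: s => [|[mo b] s] //= H [H1 H2]; split; auto. Qed.

Lemma steps_cat T (G : hedg T) a s1 s2 :
  steps_ok G a (s1 ++ s2) <-> steps_ok G a s1 /\ steps_ok G (lastn a s1) s2.
Proof.
elim: s1 a => [|[mo b] s1 IH] a /=; first by tauto.
rewrite IH /lastn /=; tauto.
Qed.

Lemma chain_cat T (r : T -> T -> Prop) x s1 s2 :
  chain r x (s1 ++ s2) <-> chain r x s1 /\ chain r (last x s1) s2.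
Proof.
elim: s1 x => [|y s1 IH] x /=; first by tauto.
rewrite IH; tauto.
Qed.

Lemma chain_rcons T (r : T -> T -> Prop) x s y :
  chain r x (rcons s y) <-> chain r x s /\ r (last x s) y.
Proof. rewrite -cats1 chain_cat /=; tauto. Qed.

Lemma chain_rev T (r : T -> T -> Prop) x p y :
  chain r x (rcons p y) -> chain (fun a b => r b a) y (rcons (rev p) x).
Proof.
elim: p x => [|z p IH] x /=; first by tauto.
move=> [H1 H2]; rewrite rev_cons chain_rcons last_rcons; split; auto.
Qed.

Lemma steps_Fwd T (G : hedg T) a q :
  steps_ok G a (map (pair Fwd) q) <-> chain (ed G) a q.
Proof. elim: q a => [|y q IH] a /=; first by tauto. rewrite IH; tauto. Qed.

Lemma steps_Bwd T (G : hedg T) a q :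
  steps_ok G a (map (pair Bwd) q) <-> chain (fun x y => ed G y x) a q.
Proof. elim: q a => [|y q IH] a /=; first by tauto. rewrite IH; tauto. Qed.

Lemma lastn_map T m (a : T) q : lastn a (map (pair m) q) = last a q.
Proof. by rewrite /lastn -map_comp map_id. Qed.

Lemma lastm_map T m mi (q : seq T) : q <> [::] -> lastm mi (map (pair m) q) = m.
Proof.
rewrite /lastm -map_comp; case: q => [|y q] //= _.
by elim: q y => [|z q IH] y //=; rewrite IH.
Qed.

Definition nok T (H : hedg T) (Z : {set T}) mi v mo : Prop :=
  if head_in mi && head_out mo then Anc H Z v else v \notin Z.

Lemma loc_nth T (P : mark -> T -> mark -> Prop) mi v s :
  loc P mi v s <-> forall i, i < size s ->
    P (nth (mi,v) ((mi,v)::s) i).1 (nth (mi,v) ((mi,v)::s) i).2 (nth (mi,v) s i).1.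
Proof.
elim: s mi v => [|[mo b] s IH] mi v /=; first by split.
split.
  move=> [H1 /IH H2] [|i] //= Hi.
  have Hi' : i < size s by [].
  rewrite (set_nth_default (mo,b) (mi,v) (s:=s)) //.
  rewrite (set_nth_default (mo,b) (mi,v) (s:=(mo,b)::s)); last by rewrite /= ltnW.
  exact: H2.
move=> H; split; first exact: (H 0).
apply/IH => i Hi; have := H i.+1 Hi => /=.
rewrite (set_nth_default (mo,b) (mi,v) (s:=s)) //.
by rewrite (set_nth_default (mo,b) (mi,v) (s:=(mo,b)::s)) //= ltnW.
Qed.

Lemma notblocked T (H : hedg T) Z v1 s :
  ~ blocked H Z v1 s <-> v1 \notin Z /\ lastn v1 s \notin Z /\ loc (nok H Z) Bwd v1 s.
Proof.
split.
  move=> NB; split; first by apply/negP => B; apply: NB; left.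
  split; first by apply/negP => B; apply: NB; right; left.
  apply/loc_nth => -[|j] Hi /=.
    by rewrite /nok /=; apply/negP => B; apply: NB; left.
  rewrite (set_nth_default (Fwd,v1) (Bwd,v1) (s:=s) (n:=j.+1)) // (set_nth_default (Fwd,v1) (Bwd,v1) (s:=s) (n:=j)); last by rewrite ltnW.
  rewrite /nok; case: ifP => Hc.
    apply: NNPP => NA; apply: NB; right; right; exists j.+1; split=> //=.
    rewrite Hc (nth_map (Fwd,v1)) //; exact: ltnW.
  apply/negP => B; apply: NB; right; right; exists j.+1; split=> //=.
  rewrite Hc (nth_map (Fwd,v1)) //; exact: ltnW.
move=> [H1 [H2 /loc_nth H3]] [B|[B|[i [/andP[Hi0 Hi] B]]]].
- by rewrite B in H1.
- by rewrite /lastn B in H2.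
have := H3 i Hi; case: i Hi0 Hi B => [|j] // _ Hi /=.
rewrite (set_nth_default (Fwd,v1) (Bwd,v1) (s:=s) (n:=j.+1)) // (set_nth_default (Fwd,v1) (Bwd,v1) (s:=s) (n:=j)); last by rewrite ltnW.
rewrite (nth_map (Fwd,v1)); last exact: ltnW.
rewrite /nok; case: ifP => _; first by move=> B1 B2; apply: B1.
by move=> B1; rewrite B1.
Qed.

Definition Pint (T : finType) (U : {set T}) mi (v : T) mo : Prop :=
  v \in U /\ ~~ (head_in mi && head_out mo).

Lemma map_snd_pair T (m : mark) (q : seq T) : map snd (map (pair m) q) = q.
Proof. by rewrite -map_comp map_id. Qed.

Lemma L1 (T : finType) (P : mark -> T -> mark -> Prop) m x q :
  (forall mi v, v \in belast x q -> P mi v Fwd) -> loc P m x (map (pair Fwd) q).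
Proof.
elim: q m x => [|y q IH] m x //= H; split.
  by apply: H; rewrite inE eqxx.
by apply: IH => mi v Hv; apply: H; rewrite inE Hv orbT.
Qed.

Lemma L2 (T : finType) (U : {set T}) q1 mid q2 x :
  (mid = [::] \/ exists w, mid = [:: (Bi, w)]) ->
  (forall v, v \in belast x (q1 ++ map snd mid ++ q2) -> v \in U) ->
  loc (Pint U) Bwd x (map (pair Bwd) q1 ++ mid ++ map (pair Fwd) q2).
Proof.
move=> Hmid; elim: q1 x => [|y q1 IH] x /= H; rewrite /Pint.
  case: Hmid H => [->|[w ->]] /= H.
    by apply: L1 => mi v Hv; rewrite /Pint /= andbF; split=> //; apply: H.
  split; first by split=> //; apply: H; rewrite inE eqxx.
  by apply: L1 => mi v Hv; rewrite /Pint /= andbF; split=> //; apply: H; rewrite inE Hv orbT.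
split; first by split=> //; apply: H; rewrite inE eqxx.
by apply: IH => v Hv; apply: H; rewrite inE Hv orbT.
Qed.

Lemma shape_loc (T : finType) (U : {set T}) q1 mid q2 m1 b1 e' :
  (mid = [::] \/ exists w, mid = [:: (Bi, w)]) ->
  map (pair Bwd) q1 ++ mid ++ map (pair Fwd) q2 = (m1, b1) :: e' ->
  (forall v, v \in belast b1 (map snd e') -> v \in U) ->
  loc (Pint U) m1 b1 e'.
Proof.
move=> Hmid; case: q1 => [|y q1] /=.
  case: Hmid => [->|[w ->]] /=.
    case: q2 => [|y q2] //= [<- <- <-] H.
    by apply: L1 => mi v Hv; rewrite /Pint /= andbF; split=> //; apply: H; rewrite map_snd_pair.
  case=> <- <- <- H.
  by apply: L1 => mi v Hv; rewrite /Pint /= andbF; split=> //; apply: H; rewrite map_snd_pair.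
case=> <- <- <- H; apply: L2 => // v Hv; apply: H.
by rewrite !map_cat !map_snd_pair.
Qed.

Lemma rcons_neq T (s : seq T) x : rcons s x <> [::].
Proof. by case: s. Qed.

Lemma shape_exp (T : finType) (G : hedg T) (U : {set T}) q1 mid q2 I a b m :
  (mid = [::] \/ exists w, mid = [:: (Bi, w)]) ->
  let e := map (pair Bwd) q1 ++ mid ++ map (pair Fwd) q2 in
  steps_ok G a e -> map snd e = rcons I b -> all (fun u => u \in U) I ->
  head_out (head Fwd (map fst e)) = head_out m ->
  head_in (last Fwd (map fst e)) = head_in m ->
  exists m1 b1 e', steps_ok G a ((m1,b1)::e') /\ head_out m1 = head_out m /\
    head_in (lastm m1 e') = head_in m /\ lastn b1 e' = b /\ loc (Pint U) m1 b1 e'.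
Proof.
move=> Hmid e; rewrite /e.
case E: (map (pair Bwd) q1 ++ mid ++ map (pair Fwd) q2) => [|[m1 b1] e'].
  by move=> _ /= H; case: (rcons_neq (esym H)).
move=> Hs Hn HI Hh Hl; exists m1, b1, e'.
have Hn' := Hn; rewrite /= lastI in Hn'.
have [Hb HbI] : belast b1 (map snd e') = I /\ last b1 (map snd e') = b.
  by case: (rcons_inj Hn') => -> ->.
split; first by []. split; first by []. split; first by [].
rewrite /lastn HbI; split=> //.
apply: (shape_loc Hmid E) => v; rewrite Hb => Hv.
by move/allP: HI; apply.
Qed.

Lemma headB T (q : seq T) r d : q <> [::] ->
  head d (map fst (map (pair Bwd) q ++ r)) = Bwd.
Proof. by case: q. Qed.

Lemma lastF T (q : seq T) r d : q <> [::] ->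
  last d (map fst (r ++ map (pair Fwd) q)) = Fwd.
Proof.
move=> H; rewrite map_cat last_cat -map_comp.
case: q H => [|y q] //= _; elim: q y => [|z q IH] y //=; exact: IH.
Qed.

Lemma head_pair T (m : mark) (q : seq T) (d : mark) : q <> [::] -> head d (map fst (map (pair m) q)) = m.
Proof. by case: q. Qed.

Lemma last_pair T (m : mark) (q : seq T) (d : mark) : q <> [::] -> last d (map fst (map (pair m) q)) = m.
Proof.
rewrite -map_comp; case: q => [|y q] //= _; elim: q y => [|z q IH] y //=; exact: IH.
Qed.

Lemma LB (T : eqType) (P : mark -> T -> mark -> Prop) m x q :
  P m x Bwd -> (forall v, v \in q -> P Bwd v Bwd) -> loc P m x (map (pair Bwd) q).
Proof.
elim: q m x => [|y q IH] m x //= H1 H2; split=> //.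
apply: IH; first by apply: H2; rewrite inE eqxx.
by move=> v Hv; apply: H2; rewrite inE Hv orbT.
Qed.

Lemma lastm_cat T mi (s1 s2 : seq (mark * T)) : lastm mi (s1 ++ s2) = lastm (lastm mi s1) s2.
Proof. by rewrite /lastm map_cat last_cat. Qed.

Lemma lastn_cat T (a : T) s1 s2 : lastn a (s1 ++ s2) = lastn (lastn a s1) s2.
Proof. by rewrite /lastn map_cat last_cat. Qed.

Definition noUc (T : finType) (U : {set T}) mi (v : T) mo : Prop :=
  v \in U -> ~~ (head_in mi && head_out mo).

Lemma steps_vs T (H : hedg T) a s :
  (forall x y, ed H x y -> x \in vs H /\ y \in vs H) ->
  (forall F, hy H F -> F \subset vs H) ->
  a \in vs H -> steps_ok H a s -> all (fun v => v \in vs H) (pnodes a s).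
Proof.
move=> He Hh; elim: s a => [|[m b] s IH] a /= Ha; first by rewrite Ha.
move=> [Hs Hr]; rewrite Ha /=.
have Hb : b \in vs H.
  case: m Hs => /=; first by case/He.
    by case/He.
  by case=> _ /Hh /subsetP; apply; rewrite !inE eqxx orbT.
exact: (IH b Hb Hr).
Qed.

Section Main.
Variable T : finType.
Variable G : hedg T.
Variables U Z : {set T}.
Hypothesis wf : wf_hedg G.
Hypothesis UZ : forall v, v \in U -> v \notin Z.
Hypothesis Zvs : Z \subset vs G.

Let M := marg G U.

Lemma ed_vs x y : ed G x y -> x \in vs G /\ y \in vs G.
Proof. by case: wf => H _; apply: H. Qed.

Lemma Z_vs z : z \in Z -> z \in vs G.
Proof. by move/(subsetP Zvs). Qed.

Lemma Z_notU z : z \in Z -> z \notin U.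
Proof. by move=> Hz; apply/negP => /UZ; rewrite Hz. Qed.

Lemma AncM2G v : Anc M Z v -> Anc G Z v.
Proof.
case=> /= Hv [p [Hc Hl]]; split; first by move: Hv; rewrite inE => /andP[].
suff [p' [H1 H2]] : exists p', chain (ed G) v p' /\ last v p' = last v p.
  by exists p'; rewrite H2.
elim: p v Hc {Hv Hl} => [|y p IH] v /=; first by move=> _; exists [::].
move=> [[_ [_ [q [Hq _]]]] Hc].
have [p' [H1 H2]] := IH y Hc.
exists (rcons q y ++ p'); rewrite chain_cat last_cat last_rcons; split=> //.

Qed.

Lemma G2M_chain p : forall x a, a \in vs G :\: U ->
  (x = a \/ exists q, chain (ed G) a (rcons q x) /\ all (fun u => u \in U) q) ->
  chain (ed G) x p -> last x p \in Z -> exists p', chain (ed M) a p' /\ last a p' \in Z.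
Proof.
elim: p => [|y p IH] x a Ha Hx /=.
  move=> _ Hz; case: Hx => [Exa|[q [Hq Hall]]]; first by subst; exists [::].
  exists [:: x] => /=; split=> //; split=> //; split; first by [].
  split; last by exists q.
  by rewrite inE Z_vs // andbT Z_notU.
move=> [Hxy Hc] Hz.
case: Hx => [Exa|[q [Hq Hall]]].
  apply: (IH y a Ha) => //; right; exists [::]; by subst.
case HxU: (x \in U).
  apply: (IH y a Ha) => //; right; exists (rcons q x); split.
    by rewrite chain_rcons last_rcons.
  by rewrite all_rcons HxU.
have Hxv : x \in vs G :\: U by rewrite inE HxU (ed_vs Hxy).1.
have [p0 [H1 H2]] := IH y x Hxv (or_intror (ex_intro _ [::] (conj (conj Hxy I) isT))) Hc Hz.
exists (x :: p0) => /=; split=> //; split=> //; split=> //; split=> //.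
by exists q.
Qed.

Lemma AncG2M v : v \in vs G :\: U -> Anc G Z v -> Anc M Z v.
Proof.
move=> Hv [_ [p [Hc Hl]]]; split=> //.
exact: (G2M_chain Hv (or_introl erefl) Hc Hl).
Qed.


Lemma step_b a m b : step_ok M a m b -> b \in vs G :\: U.
Proof.
case: m => /=.
- by case=> _ [? _].
- by case.
by case=> _ [/subsetP H _]; apply: H; rewrite !inE eqxx orbT.
Qed.

Lemma hy_sub F x y : hy G F -> x \in F -> y \in F -> hy G [set x; y].
Proof.
move=> HF Hx Hy; case: wf => _ [_ [_ H]]; apply: (H F) => //.
by apply/subsetP => w; rewrite !inE => /orP[] /eqP ->.
Qed.

Lemma expand a m b : a \in vs G :\: U -> step_ok M a m b ->
  exists m1 b1 e', steps_ok G a ((m1,b1)::e') /\ head_out m1 = head_out m /\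
    head_in (lastm m1 e') = head_in m /\ lastn b1 e' = b /\ loc (Pint U) m1 b1 e'.
Proof.
move=> Ha; case: m => /=.
- case=> _ [_ [p [Hc Hp]]].
  apply: (@shape_exp _ G U [::] [::] (rcons p b) p a b Fwd (or_introl erefl)) => /=.
  + by rewrite steps_Fwd.
  + by rewrite map_snd_pair.
  + exact Hp.
  + by rewrite head_pair //; apply: rcons_neq.
  + by rewrite last_pair //; apply: rcons_neq.
- case=> _ [_ [p [Hc Hp]]].
  apply: (@shape_exp _ G U (rcons (rev p) b) [::] [::] (rev p) a b Bwd (or_introl erefl)) => /=.
  + by rewrite !cats0 steps_Bwd; apply: chain_rev.
  + by rewrite ?cats0 map_snd_pair ?cats0.
  + by rewrite all_rev.
  + by rewrite ?cats0 head_pair //; apply: rcons_neq.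
  + by rewrite ?cats0 last_pair //; apply: rcons_neq.
case=> Hab [Hsub [F [HF [HFs Hreach]]]].
have aNU : a \notin U by move: Ha; rewrite inE => /andP[].
have bNU : b \notin U.
  by move/subsetP: Hsub => /(_ b); rewrite !inE eqxx orbT => /(_ isT) /andP[].
have := Hreach a; rewrite !inE eqxx => /(_ isT) Ha'.
have := Hreach b; rewrite !inE eqxx orbT => /(_ isT) Hb'.
case: Ha' => [HaF | [u1 [p1 [Hu1 [Hc1 Hp1]]]]];
  case: Hb' => [HbF | [u2 [p2 [Hu2 [Hc2 Hp2]]]]].
- move/andP: HaF => [_ aF]; move/andP: HbF => [_ bF].
  apply: (@shape_exp _ G U [::] [:: (Bi,b)] [::] [::] a b Bi (or_intror (ex_intro _ b erefl))) => //=.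
  by split=> //; split=> //; apply: (hy_sub HF).
- move/andP: HaF => [_ aF]; move: Hu2; rewrite inE => /andP[u2F u2U].
  apply: (@shape_exp _ G U [::] [:: (Bi,u2)] (rcons p2 b) (u2::p2) a b Bi (or_intror (ex_intro _ u2 erefl))) => /=.
  + split; last by rewrite steps_Fwd.
    split; last exact: (hy_sub HF).
    by move=> E; rewrite E u2U in aNU.
  + by rewrite map_snd_pair.
  + by rewrite u2U.
  + by [].
  + by rewrite last_pair //; apply: rcons_neq.
- move: Hu1; rewrite inE => /andP[u1F u1U]; move/andP: HbF => [_ bF].
  apply: (@shape_exp _ G U (rcons (rev p1) u1) [:: (Bi,b)] [::] (rcons (rev p1) u1) a b Bi (or_intror (ex_intro _ b erefl))) => /=.
  + rewrite steps_cat lastn_map last_rcons /=; split; first by rewrite steps_Bwd; apply: chain_rev.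
    split=> //; split; last exact: (hy_sub HF).
    by move=> E; rewrite -E u1U in bNU.
  + by rewrite map_cat map_snd_pair cats1.
  + by rewrite all_rcons all_rev u1U.
  + by rewrite headB //; apply: rcons_neq.
  + by rewrite map_cat last_cat.
move: Hu1; rewrite inE => /andP[u1F u1U]; move: Hu2; rewrite inE => /andP[u2F u2U].
case: (eqVneq u1 u2) => [E|Ne].
  subst u2.
  apply: (@shape_exp _ G U (rcons (rev p1) u1) [::] (rcons p2 b) (rcons (rev p1) u1 ++ p2) a b Bi (or_introl erefl)) => /=.
  + rewrite steps_cat lastn_map last_rcons steps_Bwd steps_Fwd; split=> //; exact: chain_rev.
  + by rewrite map_cat !map_snd_pair rcons_cat.
  + by rewrite all_cat all_rcons all_rev u1U Hp1 Hp2.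
  + by rewrite headB //; apply: rcons_neq.
  + by rewrite map_cat last_cat last_pair //; apply: rcons_neq.
apply: (@shape_exp _ G U (rcons (rev p1) u1) [:: (Bi,u2)] (rcons p2 b) (rcons (rev p1) u1 ++ u2 :: p2) a b Bi (or_intror (ex_intro _ u2 erefl))) => /=.
+ rewrite steps_cat lastn_map last_rcons steps_Bwd /=; split; first exact: chain_rev.
  split; last by rewrite steps_Fwd.
  split; last exact: (hy_sub HF).
  by apply/eqP.
+ by rewrite map_cat /= !map_snd_pair rcons_cat.
+ by rewrite all_cat all_rcons all_rev u1U Hp1 /= u2U Hp2.
+ by rewrite headB //; apply: rcons_neq.
+ by rewrite map_cat last_cat /= last_pair //; apply: rcons_neq.
Qed.


Lemma liftA s : forall mi a, a \in vs G :\: U -> steps_ok M a s ->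
  loc (nok M Z) mi a s ->
  exists s', steps_ok G a s' /\ loc (nok G Z) mi a s' /\ lastn a s' = lastn a s.
Proof.
elim: s => [|[m b] s IH] mi a Ha /=; first by move=> _ _; exists [::].
move=> [Hst Hs] [Hn Hl].
have Hb := step_b Hst.
have [s'' [H1 [H2 H3]]] := IH m b Hb Hs Hl.
have [m1 [b1 [e' [E1 [E2 [E3 [E4 E5]]]]]]] := expand Ha Hst.
have Lb : lastn a ((m1,b1)::e') = b by move: E4; rewrite /lastn /=.
exists (((m1,b1)::e') ++ s''); split.
  by rewrite steps_cat Lb; split.
split.
  rewrite loc_cat Lb; split.
    split.
      by move: Hn; rewrite /nok E2; case: ifP => _ //; apply: AncM2G.
    apply: (loc_mono _ E5) => mi' v mo [vU nc]; rewrite /nok (negbTE nc); exact: UZ.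
  have -> : lastm mi ((m1,b1)::e') = lastm m1 e' by [].
  by apply: (loc_in _ H2) => mo; rewrite /nok E3.
move: H3; rewrite /lastn map_cat last_cat /= => <-.
by move: Lb; rewrite /lastn /= => ->.
Qed.


Lemma minpath p : forall a, chain (ed G) a p -> last a p \in Z -> a \notin Z ->
  exists p1 z, chain (ed G) a (rcons p1 z) /\ z \in Z /\ all (fun v => v \notin Z) p1.
Proof.
elim: p => [|y p IH] a /=; first by move=> _ ->.
move=> [Hay Hc] Hl Ha.
case Hy: (y \in Z); first by exists [::], y.
have [p1 [z [H1 [H2 H3]]]] := IH y Hc Hl (negbT Hy).
by exists (y :: p1), z; split=> //=; rewrite Hy.
Qed.

Lemma detour a : a \in U -> Anc G Z a -> exists d, steps_ok G a d /\
  (forall mi, loc (nok G Z) mi a d /\ loc (noUc U) mi a d /\ lastm mi d = Bwd) /\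
  lastn a d = a.
Proof.
move=> HaU [Hav [p [Hc Hl]]].
have HaZ := UZ HaU.
have [p1 [z [H1 [H2 H3]]]] := minpath Hc Hl HaZ.
exists (map (pair Fwd) (rcons p1 z) ++ map (pair Bwd) (rcons (rev p1) a)); split.
  rewrite steps_cat lastn_map last_rcons steps_Fwd steps_Bwd; split=> //.
  exact: chain_rev.
split; last by rewrite lastn_cat !lastn_map !last_rcons.
move=> mi; rewrite !loc_cat lastn_map last_rcons lastm_map; last exact: rcons_neq.
have Hp1 : forall v, v \in a :: p1 -> v \notin Z.
  move=> v; rewrite inE => /orP[/eqP -> //|]; by move/allP: H3; apply.
split; [split|split; [split|]].
- apply: L1 => mi' v; rewrite belast_rcons => Hv; rewrite /nok andbF; exact: Hp1.
- apply: LB; first by rewrite /nok /=; split; [exact: Z_vs | exists [::]].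
  move=> v; rewrite mem_rcons inE mem_rev => Hv; rewrite /nok /=; apply: Hp1.
  by rewrite inE.
- by apply: L1 => mi' v _; rewrite /noUc andbF.
- apply: LB; first by rewrite /noUc => /UZ; rewrite H2.
  by move=> v _; rewrite /noUc.
by rewrite lastm_cat lastm_map //; apply: rcons_neq.
Qed.

Lemma liftB1 s : forall mi a, steps_ok G a s -> loc (nok G Z) mi a s ->
  exists s', steps_ok G a s' /\ loc (nok G Z) mi a s' /\ loc (noUc U) mi a s' /\
    lastn a s' = lastn a s.
Proof.
elim: s => [|[m b] s IH] mi a /=; first by move=> _ _; exists [::].
move=> [Hst Hs] [Hn Hl].
have [s'' [H1 [H2 [H3 H4]]]] := IH m b Hs Hl.
case C: ((a \in U) && head_in mi && head_out m).
  move/andP: C => [/andP[HaU Hi] Ho].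
  have HA : Anc G Z a by move: Hn; rewrite /nok Hi Ho.
  have [d [D1 [D2 D3]]] := detour HaU HA.
  have [D21 [D22 D23]] := D2 mi.
  exists (d ++ (m,b) :: s''); split.
    by rewrite steps_cat D3.
  split; [|split].
  - rewrite loc_cat D3 D23; split=> //; split=> //.
    by rewrite /nok /=; apply: UZ.
  - rewrite loc_cat D3 D23; split=> //; split=> //.
  - by rewrite lastn_cat D3.
exists ((m,b) :: s''); split=> //; split=> //; split=> //.
split=> // HaU; move: C; rewrite HaU /=.
by case: (head_in mi && head_out m).
Qed.


Definition reachU (F : {set T}) x := x \in F \/ exists u1 p, u1 \in F :&: U /\
  chain (ed G) u1 (rcons p x) /\ all (fun u => u \in U) p.

Definition Rsig (ms : mark) a v : Prop :=
  match ms with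
  | Fwd => exists p, chain (ed G) a (rcons p v) /\ all (fun u => u \in U) p
  | Bwd => exists p, chain (ed G) v (rcons p a) /\ all (fun u => u \in U) p
  | Bi => exists F, hy G F /\ F \subset [set a; v] :|: U /\ reachU F a /\ reachU F v
  end.

Lemma stepG_vs v mo w : step_ok G v mo w -> w \in vs G.
Proof.
case: mo => /=; [by case/ed_vs | by case/ed_vs |].
case=> _ H; case: wf => _ [Hs _]; move/subsetP: (Hs _ H); apply.
by rewrite !inE eqxx orbT.
Qed.

Lemma init v mo w : step_ok G v mo w -> Rsig mo v w.
Proof.
case: mo => /=.
- by move=> H; exists [::].
- by move=> H; exists [::].
case=> _ H; exists [set v; w]; split=> //; split; first exact: subsetUl.
by split; left; rewrite !inE eqxx ?orbT.
Qed.

Lemma trans ms a v mv mo w : v \in U -> v \in vs G -> Rsig ms a v ->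
  head_in mv = head_in ms -> ~~ (head_in mv && head_out mo) -> step_ok G v mo w ->
  exists ms', Rsig ms' a w /\ head_out ms' = head_out ms /\ head_in mo = head_in ms'.
Proof.
move=> vU vV; case: ms => /= HR Hi; rewrite Hi /=.
- case: mo => //= _ Hvw; exists Fwd; split=> //.
  case: HR => p [Hc Hp]; exists (rcons p v).
  by split; [rewrite chain_rcons last_rcons | rewrite all_rcons vU].
- move=> _; case: mo => /= Hst.
  + exists Bi; split=> //.
    case: HR => p [Hc Hp]; exists [set v]; split; first by case: wf => _ [_ [H _]]; apply: H.
    split; first by apply/subsetP => x; rewrite !inE => /eqP ->; rewrite vU !orbT.
    split; right.
      by exists v, p; rewrite !inE eqxx vU.
    by exists v, [::]; rewrite !inE eqxx vU.
  + exists Bwd; split=> //.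
    case: HR => p [Hc Hp]; exists (v :: p) => /=; by rewrite vU.
  + exists Bi; split=> //.
    case: HR => p [Hc Hp]; case: Hst => Hne Hhy; exists [set v; w]; split=> //.
    split; first by apply/subsetP => x; rewrite !inE => /orP[] /eqP ->; rewrite ?vU ?eqxx ?orbT.
    split; last by left; rewrite !inE eqxx orbT.
    by right; exists v, p; rewrite !inE eqxx vU.
- case: mo => //= _ Hvw; exists Bi; split=> //.
  case: HR => F [HF [HFs [Ha Hv]]]; exists F; split=> //; split.
    apply/subsetP => x /(subsetP HFs); rewrite !inE => /orP[/orP[H|H]|H]; rewrite ?H ?orbT //.
    by move/eqP: H => ->; rewrite vU orbT.
  split=> //; right.
  case: Hv => [vF|[u1 [p [Hu1 [Hc Hp]]]]].
    by exists v, [::]; rewrite !inE vF vU.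
  exists u1, (rcons p v); split=> //.
  by rewrite chain_rcons last_rcons all_rcons vU.
Qed.


Lemma emit ms a v : a \in vs G :\: U -> v \in vs G :\: U -> Rsig ms a v ->
  ~ (ms = Bi /\ a = v) -> step_ok M a ms v.
Proof.
move=> Ha Hv; case: ms => /=.
- by move=> H _; split=> //; split.
- by move=> H _; split=> //; split.
move=> [F [HF [HFs [Ra Rv]]]] Hne; split; first by move=> E; apply: Hne.
split.
  by apply/subsetP => x; rewrite !inE => /orP[] /eqP ->; [move: Ha|move: Hv]; rewrite inE.
exists F; split=> //; split=> //.
have aNU : a \notin U by move: Ha; rewrite inE => /andP[].
have vNU : v \notin U by move: Hv; rewrite inE => /andP[].
move=> x; rewrite !inE => /orP[] /eqP ->.
  by case: Ra => [aF|R]; [left; rewrite aNU aF | right].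
by case: Rv => [vF|R]; [left; rewrite vNU vF | right].
Qed.

Lemma nokG2M mi v mo : v \in vs G :\: U -> nok G Z mi v mo -> nok M Z mi v mo.
Proof. by move=> Hv; rewrite /nok; case: ifP => // _; apply: AncG2M. Qed.

Lemma seg s : forall a mina ms v mv,
  a \in vs G :\: U -> v \in vs G -> Rsig ms a v -> head_in mv = head_in ms ->
  nok M Z mina a ms ->
  steps_ok G v s -> loc (nok G Z) mv v s -> loc (noUc U) mv v s -> lastn v s \notin U ->
  exists sm, steps_ok M a sm /\ loc (nok M Z) mina a sm /\ lastn a sm = lastn v s.
Proof.
elim: s => [|[mo w] s IH] a mina ms v mv Ha Hv HR Hi HN.
  move=> _ _ _ /= HvU.
  have Hv' : v \in vs G :\: U by rewrite inE HvU Hv.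
  case: (eqVneq a v) => [Eav|Nav].
    case: ms HR Hi HN => HR Hi HN.
    - exists [:: (Fwd, v)]; split; first by split=> //; apply: emit => //; case.
      by split=> //; split.
    - exists [:: (Bwd, v)]; split; first by split=> //; apply: emit => //; case.
      by split=> //; split.
    by exists [::]; rewrite /lastn /= Eav.
  exists [:: (ms, v)]; split; first by split=> //; apply: emit => //; case=> _ E; rewrite E eqxx in Nav.
  by split=> //; split.
move=> /= [Hst Hs] [Hn Hl] [Hu Hul] Hlast.
have Hw := stepG_vs Hst.
case vU: (v \in U).
  have [ms' [HR' [Ho' Hi']]] := trans vU Hv HR Hi (Hu vU) Hst.
  have HN' : nok M Z mina a ms' by move: HN; rewrite /nok Ho'.
  have [sm [S1 [S2 S3]]] := IH a mina ms' w mo Ha Hw HR' Hi' HN' Hs Hl Hul Hlast.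
  by exists sm.
have Hv' : v \in vs G :\: U by rewrite inE vU Hv.
have HNv : nok M Z ms v mo by apply: nokG2M => //; move: Hn; rewrite /nok Hi.
have [sm [S1 [S2 S3]]] := IH v ms mo w mo Hv' Hw (init Hst) erefl HNv Hs Hl Hul Hlast.
have [[Ems Eav]|NL] := classic (ms = Bi /\ a = v).
  subst ms v.
  have HNa : nok M Z mina a mo.
    move: HN Hn; rewrite /nok Hi /=.
    case: (head_in mina) => /=; case: (head_out mo) => //= _; exact: nokG2M.
  have [sm2 [T1 [T2 T3]]] := IH a mina mo w mo Ha Hw (init Hst) erefl HNa Hs Hl Hul Hlast.
  by exists sm2.
exists ((ms, v) :: sm); split; [split=> //|split=> //].
exact: emit.
Qed.


Lemma pathG v1 s : v1 \in vs G -> steps_ok G v1 s -> is_path G v1 s.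
Proof.
move=> Hv Hs; split=> //; apply: steps_vs => //; first exact: ed_vs.
by case: wf => _ [H _].
Qed.

Lemma pathM v1 s : v1 \in vs M -> steps_ok M v1 s -> is_path M v1 s.
Proof.
move=> Hv Hs; split=> //; apply: steps_vs => //.
  by move=> x y [Hx [Hy _]].
by move=> F [H _].
Qed.

Lemma dirA X Y : (forall v, v \in X :|: Y -> v \notin U) ->
  X \subset vs G -> Y \subset vs G -> dsep G X Y Z -> dsep M X Y Z.
Proof.
move=> XU HX HY HG v1 s [Hall Hs] Hend; apply: NNPP => /notblocked [H1 [H2 H3]].
have Hv1 : v1 \in vs M by move: Hall => /= /andP[].
have [s' [S1 [S2 S3]]] := liftA Hv1 Hs H3.
have Hv1G : v1 \in vs G by move: Hv1; rewrite /= inE => /andP[].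
have := HG v1 s' (pathG Hv1G S1).
rewrite /lastn in S3; rewrite S3 => /(_ Hend).
by apply/notblocked; rewrite /lastn S3.
Qed.

Lemma dirB X Y : (forall v, v \in X :|: Y -> v \notin U) ->
  X \subset vs G -> Y \subset vs G -> dsep M X Y Z -> dsep G X Y Z.
Proof.
move=> XU HX HY HM v1 s [Hall Hs] Hend; apply: NNPP => /notblocked [H1 [H2 H3]].
have Hv1G : v1 \in vs G by move: Hall => /= /andP[].
have [v1X lX] : v1 \in X :|: Y /\ last v1 (map snd s) \in X :|: Y.
  by case: Hend => [[A B]|[A B]]; rewrite !inE A B ?orbT.
have Hv1 : v1 \in vs M by rewrite /= inE Hv1G XU.
have [s1 [S1 [S2 [S3 S4]]]] := liftB1 Hs H3.
rewrite /lastn in S4.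
case: s1 S1 S2 S3 S4 => [|[m b] s1] /=.
  move=> _ _ _ E.
  rewrite -E in Hend; have := HM v1 [::] (@pathM v1 [::] Hv1 I) Hend.
  by apply/notblocked.
move=> [Hst Hs1] [Hn Hl] [Hu Hul] E.
have Hb := stepG_vs Hst.
have HN : nok M Z Bwd v1 m by rewrite /nok /=.
have Hlast : lastn b s1 \notin U by rewrite /lastn E XU.
have [sm [M1 [M2 M3]]] := seg Hv1 Hb (init Hst) erefl HN Hs1 Hl Hul Hlast.
have := HM v1 sm (pathM Hv1 M1).
rewrite /lastn in M3; rewrite M3 E => /(_ Hend).
by apply/notblocked; rewrite /lastn M3 E.
Qed.

End Main.

Theorem mainTheorem18 (T : finType) (G : hedg T) (X Y Z U : {set T}) :
  wf_hedg G ->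
  X \subset vs G -> Y \subset vs G -> Z \subset vs G -> U \subset vs G ->
  [disjoint U & X :|: Y :|: Z] ->
  (dsep G X Y Z <-> dsep (marg G U) X Y Z).
Proof.
move=> wf HX HY HZ HU Hd.
have UZ : forall v, v \in U -> v \notin Z.
  move=> v vU; apply/negP => vZ; have := disjointFr Hd vU.
  by rewrite !inE vZ !orbT.
have XU : forall v, v \in X :|: Y -> v \notin U.
  move=> v vXY; apply/negP => vU; have := disjointFr Hd vU.
  by rewrite inE vXY.
split.
- exact: (dirA wf UZ XU HX HY).
- exact: (dirB wf UZ HZ XU HX HY).
Qed.
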